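(* Let $A$ be a complete filtered associative algebra over a field $\mathbb{K}$ of characteristic zero, and let $P:A\to A$ be a linear map preserving the filtration which is moreover an idempotent algebra homomorphism. Let $\chi:A_1\to A_1$ be the BCH-recursion map associated to $P$. Then for every $u\in A_1$, $$\chi(u)=u+\mathrm{BCH}\big(-P(u),u\big).$$
   Context: A complete filtered associative algebra is an associative algebra $A$ with a decreasing filtration $A=A_0\supseteq A_1\supseteq\cdots$ by subalgebras with $A_mA_n\subseteq A_{m+n}$ and $A\cong\varprojlim A/A_n$. $\mathrm{BCH}(x,y)$ is the Baker--Campbell--Hausdorff series defined by $\exp(x)\exp(y)=\exp(x+y+\mathrm{BCH}(x,y))$. With $\tilde P:=\mathrm{id}_A-P$, the BCH-recursion map associated to $P$ is the unique map $\chi:A_1\to A_1$ satisfying $\chi(a)=a-\mathrm{BCH}\big(P(\chi(a)),\tilde P(\chi(a))\big)$ for all $a\in A_1$ (the limit of the iteration $\chi_{(0)}(a)=a$, $\chi_{(n+1)}(a)=a-\mathrm{BCH}(P(\chi_{(n)}(a)),\tilde P(\chi_{(n)}(a)))$ in the filtration topology). *)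

(* Defs.v *)
From HB Require Import structures.
From mathcomp Require Import all_boot all_order all_algebra.
From Stdlib Require Import ClassicalEpsilon.
Set Implicit Arguments. Unset Strict Implicit. Unset Printing Implicit Defensive.
Import Order.TTheory GRing.Theory.
Local Open Scope ring_scope.

Section FilteredAlgebra.
Variables (K : fieldType) (A : algType K).

(* A decreasing filtration A = A_0 ⊇ A_1 ⊇ ... by subspaces (A_n for n>=1 are
   non-unital subalgebras by the product condition), with A_m A_n ⊆ A_(m+n),
   and A ≅ lim A/A_n, i.e. A -> lim A/A_n is injective (Hausdorff) and
   surjective (every compatible family has a preimage). *)
Definition complete_filtration (F : nat -> A -> Prop) : Prop :=
  (forall x, F 0%N x) /\
  (forall n x, F n.+1 x -> F n x) /\
  (forall n, F n 0) /\
  (forall n x y, F n x -> F n y -> F n (x + y)) /\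
  (forall n (c : K) x, F n x -> F n (c *: x)) /\
  (forall m n x y, F m x -> F n y -> F (m + n)%N (x * y)) /\
  (forall x, (forall n, F n x) -> x = 0) /\
  (forall s : nat -> A, (forall n, F n (s n.+1 - s n)) ->
     exists x, forall n, F n (x - s n)).

Definition is_flim (F : nat -> A -> Prop) (s : nat -> A) (x : A) : Prop :=
  forall n, exists N, forall m, (N <= m)%N -> F n (s m - x).

Definition flim (F : nat -> A -> Prop) (s : nat -> A) : A :=
  epsilon (inhabits 0) (is_flim F s).

Definition fexp F (x : A) : A :=
  flim F (fun n => \sum_(k < n) (((k`!)%:R : K)^-1 *: x ^+ k)).

Definition flog1p F (y : A) : A :=
  flim F (fun n => \sum_(k < n) (((-1) ^+ k / (k.+1)%:R : K) *: y ^+ k.+1)).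

Definition flog F (z : A) : A := flog1p F (z - 1).

Definition BCH F (x y : A) : A := flog F (fexp F x * fexp F y) - x - y.

Definition bch_rec F (P : A -> A) (a : A) : A :=
  flim F (fun n => iter n (fun c => a - BCH F (P c) (c - P c)) a).

End FilteredAlgebra.

(* Main.v *)
Require Import Defs.
From mathcomp Require Import all_boot all_order all_algebra.
From mathcomp Require Import ring.
From Stdlib Require Import ClassicalEpsilon.
Import GRing.Theory.
Local Open Scope ring_scope.
Set Implicit Arguments. Unset Strict Implicit. Unset Printing Implicit Defensive.

Section Poly.
Variable K : fieldType.
Hypothesis K0 : [pchar K] =i pred0.

Lemma natS_neq0 n : (n.+1%:R : K) != 0.
Proof. by rewrite ((pcharf0P K).1 K0). Qed.

Lemma fact_neq0 n : (n`!%:R : K) != 0.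
Proof. by rewrite ((pcharf0P K).1 K0) -lt0n fact_gt0. Qed.

Lemma fact_coef k : ((k.+1)`!%:R : K)^-1 * k.+1%:R = (k`!%:R)^-1.
Proof.
rewrite factS natrM invfM mulrC mulrA mulrV ?mul1r //.
by rewrite unitfE natS_neq0.
Qed.
Definition Eq M (q : {poly K}) := \sum_(k < M) ((k`!)%:R^-1 *: q ^+ k).

Lemma Eq_recr M q : Eq M.+1 q = Eq M q + (M`!%:R^-1) *: q^+M.
Proof. by rewrite /Eq big_ord_recr. Qed.

Lemma deriv_Eq M q : (Eq M.+1 q)^`() = q^`() * Eq M q.
Proof.
rewrite /Eq big_ord_recl /= fact0 invr1 scale1r expr0 derivD derivC add0r.
rewrite linear_sum mulr_sumr; apply: eq_bigr => i _ /=.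
rewrite linearZ /= deriv_exp /= /bump /= add1n add0n.
rewrite -scalerMnr scalerMnl scalerAr; congr (_ * (_ *: _)).
by rewrite -mulr_natr fact_coef.
Qed.

Lemma coef_from_deriv (p : {poly K}) i b : p^`()`_i = b -> p`_i.+1 = b / i.+1%:R.
Proof. by rewrite coef_deriv => <-; rewrite -[_ *+ _]mulr_natr mulfK // natS_neq0. Qed.

Lemma Eq_recl M (q : {poly K}) : Eq M.+1 q = 1 + q * \sum_(k < M) ((k.+1)`!%:R^-1 *: q ^+ k).
Proof.
rewrite /Eq big_ord_recl /= fact0 invr1 scale1r expr0 mulr_sumr; congr (_ + _).
by apply: eq_bigr => i _; rewrite -scalerAr -exprS /bump /= add1n.
Qed.

Lemma Eq_coef0 M (q : {poly K}) : q`_0 = 0 -> (Eq M.+1 q)`_0 = 1.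
Proof. by move=> q0; rewrite Eq_recl coefD coef0M q0 mul0r addr0 coefC. Qed.

Lemma expneg_poly M i : (i <= M)%N -> (Eq M.+1 (-'X) * Eq M.+1 'X)`_i = (i == 0%N)%:R.
Proof.
case: i => [|i] iM.
  by rewrite coef0M !Eq_coef0 ?mulr1 // ?coefN coefX // oppr0.
have H : (Eq M.+1 (-'X) * Eq M.+1 'X)^`() = 'X^M * ((M`!%:R^-1) *: ((-1)^+M *: Eq M 'X - Eq M (-'X))).
  rewrite derivM !deriv_Eq derivN derivX.
  rewrite !Eq_recr.
  have -> : (-'X)^+M = (-1)^+M *: ('X^M : {poly K}) by rewrite -scaleN1r exprZn.
  set a := Eq M 'X; set b := Eq M (-'X).
  rewrite -!(mul_polyC).

  ring.
rewrite (@coef_from_deriv _ i 0) ?mul0r //.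
by rewrite H coefXnM iM.
Qed.

Definition pL N (w : {poly K}) := \sum_(k < N) (((-1)^+k / k.+1%:R) *: w^+k.+1).

Lemma deriv_pL N w : (pL N w)^`() = w^`() * \sum_(k < N) (-w)^+k.
Proof.
rewrite /pL linear_sum mulr_sumr; apply: eq_bigr => k _ /=.
rewrite linearZ /= deriv_exp /= -scalerMnr scalerMnl scalerAr; congr (_ * _).
rewrite -mulr_natr divfK ?natS_neq0 //.
by rewrite -scaleN1r exprZn.
Qed.

Lemma logexp_poly M i : (i <= M)%N -> (pL M.+1 (Eq M.+1 'X - 1))`_i = (i == 1%N)%:R.
Proof.
set R := \sum_(k < M) ((k.+1)`!%:R^-1 *: ('X : {poly K}) ^+ k).
set w := Eq M.+1 'X - 1.
have Ew : w = 'X * R by rewrite /w Eq_recl addrC addKr.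
have w0 : w`_0 = 0 by rewrite Ew coef0M coefX mul0r.
case: i => [|i] iM.
  rewrite /pL coef_sum big1 // => k _.
  by rewrite coefZ exprS coef0M w0 mul0r mulr0.
set S := \sum_(k < M.+1) (-w)^+k.
have E1 : Eq M 'X = 1 + w - (M`!%:R^-1) *: 'X^M.
  by rewrite /w Eq_recr -!mul_polyC; ring.
have E2 : (1 + w) * S = 1 - ('X * - R)^+M.+1.
  have := subrX1 (-w) M.+1; rewrite -/S => H.
  rewrite mulrN -Ew.
  have -> : (1 + w) * S = - ((-w - 1) * S) by ring.
  by rewrite -H; ring.
have H : (pL M.+1 w)^`() = 1 - 'X^M * ('X * (-R)^+M.+1 + (M`!%:R^-1) *: S).
  rewrite deriv_pL /w derivB deriv_Eq derivX derivC subr0 mul1r -/w E1 -/S.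
  rewrite mulrBl E2 exprMn exprS.
  rewrite -!mul_polyC.
  ring.
rewrite (@coef_from_deriv _ i ((i == 0%N)%:R)).
  by case: i {iM H} => [|i] /=; rewrite ?mul0r // divr1.
rewrite H coefB coef1 coefXnM iM subr0.
by case: i {iM H}.
Qed.
End Poly.

Section Z. Variable V : zmodType.
Lemma zsplit (x w y : V) : x - y = (x - w) + (w - y).
Proof. by rewrite addrA subrK. Qed.
Lemma zI0 (a x y : V) : (a - x) - (a - y) = y - x.
Proof. by rewrite opprB addrC addrA subrK. Qed.
Lemma zB1 (a b c : V) : (a - c) - (b - c) = a - b.
Proof. by rewrite opprB addrA subrK. Qed.
Lemma zadd (a b : V) : (a + b) - a = b.
Proof. by rewrite addrC addKr. Qed.
Lemma zBB (a b c d : V) : (a - b) - (c - d) = (a - c) - (b - d).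
Proof. by rewrite !opprB addrACA [RHS]addrACA (addrC (-b)). Qed.
Lemma zDD (a b c d : V) : (a + b) - (c + d) = (a - c) + (b - d).
Proof. by rewrite opprD addrACA. Qed.
Lemma zI2 (a x y p q : V) : (a + x + p) - (a + y + q) - (x - y) = p - q.
Proof. by rewrite (zDD (a + x)) (zDD a) subrr add0r zadd. Qed.
End Z.

Section Filt.
Variables (K : fieldType) (A : algType K) (F : nat -> A -> Prop).
Hypothesis HF : complete_filtration F.
Hypothesis K0 : [pchar K] =i pred0.

Lemma F0 x : F 0 x. Proof. by case: HF. Qed.
Lemma FS n x : F n.+1 x -> F n x. Proof. by case: HF => _ [H _]; apply: H. Qed.
Lemma Fz n : F n 0. Proof. by case: HF => _ [_ [H _]]; apply: H. Qed.
Lemma FD n x y : F n x -> F n y -> F n (x + y).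
Proof. by case: HF => _ [_ [_ [H _]]]; apply: H. Qed.
Lemma FZ n c x : F n x -> F n (c *: x).
Proof. by case: HF => _ [_ [_ [_ [H _]]]]; apply: H. Qed.
Lemma FM m n x y : F m x -> F n y -> F (m + n) (x * y).
Proof. by case: HF => _ [_ [_ [_ [_ [H _]]]]]; apply: H. Qed.
Lemma Fsep x : (forall n, F n x) -> x = 0.
Proof. by case: HF => _ [_ [_ [_ [_ [_ [H _]]]]]]; apply: H. Qed.
Lemma Fcomp (s : nat -> A) : (forall n, F n (s n.+1 - s n)) ->
  exists x, forall n, F n (x - s n).
Proof. by case: HF => _ [_ [_ [_ [_ [_ [_ H]]]]]]; apply: H. Qed.

Lemma Fmono m n x : (m <= n)%N -> F n x -> F m x.
Proof.
elim: n m => [|n IH] m; first by rewrite leqn0 => /eqP->.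
rewrite leq_eqVlt => /orP[/eqP-> //|]; rewrite ltnS => mn Fx.
exact: IH mn (FS Fx).
Qed.
Lemma FN n x : F n x -> F n (- x).
Proof. by move=> Fx; rewrite -scaleN1r; apply: FZ. Qed.
Lemma FB n x y : F n x -> F n y -> F n (x - y).
Proof. by move=> Fx Fy; apply: FD => //; apply: FN. Qed.
Lemma FMl n x y : F n y -> F n (x * y).
Proof. by move=> Fy; have := FM (F0 x) Fy. Qed.
Lemma FMr n x y : F n x -> F n (x * y).
Proof. by move=> Fx; have := FM Fx (F0 y); rewrite addn0. Qed.
Lemma Fsum n (I : Type) (r : seq I) (P : pred I) (f : I -> A) :
  (forall i, P i -> F n (f i)) -> F n (\sum_(i <- r | P i) f i).
Proof. by move=> H; apply: big_ind => //; [apply: Fz | apply: FD]. Qed.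
Lemma FX k x : F 1 x -> F k (x ^+ k).
Proof.
move=> Fx; elim: k => [|k IH]; first exact: F0.
by rewrite exprS; have := FM Fx IH.
Qed.
Lemma Feq x y : (forall n, F n (x - y)) -> x = y.
Proof. by move=> H; apply/subr0_eq/Fsep. Qed.

Definition FE n x y := F n (x - y).
Lemma FE_refl n x : FE n x x. Proof. by rewrite /FE subrr; apply: Fz. Qed.
Lemma FE_sym n x y : FE n x y -> FE n y x.
Proof. by rewrite /FE => H; rewrite -opprB; apply: FN. Qed.
Lemma FE_trans n x y z : FE n x y -> FE n y z -> FE n x z.
Proof. by rewrite /FE (zsplit x y z) => H1 H2; apply: FD. Qed.
Lemma FE_add n x x' y y' : FE n x x' -> FE n y y' -> FE n (x + y) (x' + y').
Proof. by rewrite /FE zDD => H1 H2; apply: FD. Qed.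
Lemma FE_opp n x x' : FE n x x' -> FE n (- x) (- x').
Proof. by rewrite /FE -opprD => H; apply: FN. Qed.
Lemma FE_sub n x x' y y' : FE n x x' -> FE n y y' -> FE n (x - y) (x' - y').
Proof. by move=> H1 H2; apply: FE_add => //; apply: FE_opp. Qed.
Lemma FE_mul n x x' y y' : FE n x x' -> FE n y y' -> FE n (x * y) (x' * y').
Proof.
rewrite /FE => H1 H2.
have -> : x * y - x' * y' = x * (y - y') + (x - x') * y'.
  by rewrite mulrBr mulrBl addrA subrK.
by apply: FD; [apply: FMl | apply: FMr].
Qed.
Lemma FE_mono m n x y : (m <= n)%N -> FE n x y -> FE m x y.
Proof. exact: Fmono. Qed.
Lemma FE_eq x y : (forall n, FE n x y) -> x = y.
Proof. exact: Feq. Qed.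
Lemma FE_eqS x y : (forall n, FE n.+1 x y) -> x = y.
Proof. by move=> H; apply: Feq => n; apply: FS; apply: H. Qed.
Lemma FE_F n x y : FE n x y -> F n y -> F n x.
Proof. by rewrite /FE => H Fy; rewrite -(subrK y x); apply: FD. Qed.

Lemma flim_eq s x : is_flim F s x -> flim F s = x.
Proof.
move=> Hx.
have Hy := epsilon_spec (inhabits 0) (is_flim F s) (ex_intro _ x Hx).
rewrite /flim; set y := epsilon _ _ in Hy *.
apply: Feq => n.
have [N1 H1] := Hx n; have [N2 H2] := Hy n.
rewrite -(zI0 (s (maxn N1 N2))).
by apply: FB; [apply: H1 | apply: H2]; rewrite leq_max leqnn ?orbT.
Qed.

Lemma cauchy_lim s : (forall n, F n (s n.+1 - s n)) -> forall n, F n (flim F s - s n).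
Proof.
move=> Hs; have [x Hx] := Fcomp Hs.
have -> : flim F s = x; last exact: Hx.
apply: flim_eq => n; exists n => m nm.
by rewrite -opprB; apply: FN; apply: Fmono nm (Hx m).
Qed.


Lemma zI3 (x y p q : A) : (x + p) - (y + q) - (x - y) = p - q.
Proof. by rewrite (zDD x) zadd. Qed.

Definition Es (x : A) n := \sum_(k < n) (((k`!)%:R : K)^-1 *: x ^+ k).
Definition Ls (y : A) n := \sum_(k < n) (((-1) ^+ k / (k.+1)%:R : K) *: y ^+ k.+1).

Lemma exp_approx x n : F 1 x -> F n (fexp F x - Es x n).
Proof.
move=> Fx; apply: (@cauchy_lim (Es x)) => m.
by rewrite /Es big_ord_recr /= zadd; apply: FZ; apply: FX.
Qed.

Lemma log_approx z n : F 1 z -> F n (flog1p F z - Ls z n).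
Proof.
move=> Fz1; apply: (@cauchy_lim (Ls z)) => m.
by rewrite /Ls big_ord_recr /= zadd; apply: FZ; apply: FS; apply: FX.
Qed.

Lemma powB_weak n a b k : F n (a - b) -> F n (a^+k - b^+k).
Proof.
move=> Hab; elim: k => [|k IH]; first by rewrite subrr; apply: Fz.
have -> : a^+k.+1 - b^+k.+1 = a * (a^+k - b^+k) + (a - b) * b^+k.
  by rewrite !exprS mulrBr mulrBl addrA subrK.
by apply: FD; [apply: FMl | apply: FMr].
Qed.

Lemma powB_strong n a b k : F 1 a -> F 1 b -> F n (a - b) ->
  F (n + k) (a^+k.+1 - b^+k.+1).
Proof.
move=> Fa Fb Hab; elim: k => [|k IH]; first by rewrite addn0 !expr1.
have -> : a^+k.+2 - b^+k.+2 = a * (a^+k.+1 - b^+k.+1) + (a - b) * b^+k.+1.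
  by rewrite [a^+k.+2]exprS [b^+k.+2]exprS mulrBr mulrBl addrA subrK.
apply: FD; first by have := FM Fa IH; rewrite add1n addnS.
exact: FM Hab (FX k.+1 Fb).
Qed.

Lemma sum_lip (c : nat -> K) x y m N : F 1 x -> F 1 y -> F m (x - y) ->
  F m.+1 (\sum_(k < N) c k *: (x^+k.+2 - y^+k.+2)).
Proof.
move=> Fx Fy Hxy; apply: Fsum => k _; apply: FZ.
apply: (@Fmono _ (m + k.+1)); first by rewrite addnS ltnS leq_addr.
exact: powB_strong.
Qed.

Lemma sumZB (c : nat -> K) (f g : nat -> A) N :
  \sum_(k < N) c k *: f k - \sum_(k < N) c k *: g k = \sum_(k < N) c k *: (f k - g k).
Proof. by rewrite -sumrB; apply: eq_bigr => k _; rewrite scalerBr. Qed.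

Lemma Es_split x N : Es x N.+2 = 1 + x + \sum_(k < N) ((k.+2)`!%:R^-1 *: x^+k.+2).
Proof.
rewrite /Es !big_ord_recl /= fact0 invr1 !scale1r expr0 expr1 addrA.
by [].
Qed.

Lemma Ls_split z N : Ls z N.+1 = z + \sum_(k < N) (((-1)^+k.+1 / k.+2%:R : K) *: z^+k.+2).
Proof.
rewrite /Ls big_ord_recl /= expr0 div1r invr1 scale1r expr1.
by [].
Qed.

Lemma exp_lip x y m : F 1 x -> F 1 y -> F m (x - y) ->
  FE m.+1 (fexp F x - fexp F y) (x - y).
Proof.
move=> Fx Fy Hxy; apply: (@FE_trans _ _ (Es x m.+2 - Es y m.+2)).
  by apply: FE_sub; apply: (@Fmono _ m.+2) => //; apply: exp_approx.
rewrite /FE !Es_split zI2  -sumrB. apply: Fsum => k _; rewrite -scalerBr; apply: FZ.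
apply: (@Fmono _ (m + k.+1)); first by rewrite addnS ltnS leq_addr.
exact: powB_strong.
Qed.

Lemma log_lip z z' m : F 1 z -> F 1 z' -> F m (z - z') ->
  FE m.+1 (flog1p F z - flog1p F z') (z - z').
Proof.
move=> Fz1 Fz2 Hzz; apply: (@FE_trans _ _ (Ls z m.+1 - Ls z' m.+1)).
  by apply: FE_sub; apply: log_approx.
rewrite /FE !Ls_split zI3 -sumrB. apply: Fsum => k _; rewrite -scalerBr; apply: FZ.
apply: (@Fmono _ (m + k.+1)); first by rewrite addnS ltnS leq_addr.
exact: powB_strong.
Qed.

Lemma Es1 x : Es x 1 = 1.
Proof. by rewrite /Es big_ord1 fact0 invr1 scale1r expr0. Qed.

Lemma Ls1 z : Ls z 1 = z.
Proof. by rewrite /Ls big_ord1 expr0 div1r invr1 scale1r expr1. Qed.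

Lemma exp1_F1 x : F 1 x -> F 1 (fexp F x - 1).
Proof.
move=> Fx; apply: (@FE_F _ _ (Es x 1 - 1)); last by rewrite Es1 subrr; apply: Fz.
by apply: FE_sub; [apply: exp_approx | apply: FE_refl].
Qed.

Lemma log_F1 z : F 1 z -> F 1 (flog1p F z).
Proof.
move=> Fz1; apply: (@FE_F _ _ (Ls z 1)); last by rewrite Ls1.
exact: log_approx.
Qed.

Lemma horner_F z (p : {poly K}) n : F 1 z -> (forall i, (i < n)%N -> p`_i = 0) ->
  F n (horner_alg z p).
Proof.
move=> Fz1 Hp; rewrite -[p]coefK poly_def rmorph_sum; apply: Fsum => i _.
rewrite -mul_polyC rmorphM /= horner_algC rmorphXn /= horner_algX mulr_algl.
case: (ltnP i n) => [/Hp->|ni]; first by rewrite scale0r; apply: Fz.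
by apply: FZ; apply: (Fmono ni); apply: FX.
Qed.

Lemma horner_Eq x M (q : {poly K}) : horner_alg x (Eq M q) = Es (horner_alg x q) M.
Proof.
rewrite /Eq /Es rmorph_sum; apply: eq_bigr => i _.
by rewrite -mul_polyC rmorphM /= horner_algC rmorphXn /= mulr_algl.
Qed.

Lemma horner_pL x M (q : {poly K}) : horner_alg x (pL M q) = Ls (horner_alg x q) M.
Proof.
rewrite /pL /Ls rmorph_sum; apply: eq_bigr => i _.
by rewrite -mul_polyC rmorphM /= horner_algC rmorphXn /= mulr_algl.
Qed.

Lemma logexp x : F 1 x -> flog1p F (fexp F x - 1) = x.
Proof.
move=> Fx; apply: FE_eqS => n.
set e := fexp F x - 1.
have Fe : F 1 e := exp1_F1 Fx.
apply: (@FE_trans _ _ (Ls e n.+1)); first exact: log_approx.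
apply: (@FE_trans _ _ (Ls (Es x n.+1 - 1) n.+1)).
  rewrite /FE /Ls -sumrB; apply: Fsum => k _; rewrite -scalerBr; apply: FZ.
  by apply: powB_weak; rewrite /e zB1; apply: exp_approx.
have -> : Ls (Es x n.+1 - 1) n.+1 = horner_alg x (pL n.+1 (Eq n.+1 'X - 1)).
  by rewrite horner_pL rmorphB /= rmorph1 horner_Eq horner_algX.
rewrite /FE -{2}(horner_algX x) -rmorphB; apply: horner_F => // i iN.
by rewrite coefB (logexp_poly K0) // coefX subrr.
Qed.

Lemma log_inj z z' : F 1 z -> F 1 z' -> flog1p F z = flog1p F z' -> z = z'.
Proof.
move=> H1 H2 E; apply: Feq; elim => [|n IH]; first exact: F0.
have := log_lip H1 H2 IH; rewrite /FE E subrr sub0r => H.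
by rewrite -[z - z']opprK; apply: FN.
Qed.

Lemma explog z : F 1 z -> fexp F (flog1p F z) - 1 = z.
Proof.
move=> Fz1; have Fl := log_F1 Fz1.
by apply: log_inj => //; [apply: exp1_F1 | rewrite logexp].
Qed.

Lemma expN x : F 1 x -> fexp F (-x) * fexp F x = 1.
Proof.
move=> Fx; apply: FE_eqS => n.
apply: (@FE_trans _ _ (Es (-x) n.+1 * Es x n.+1)).
  by apply: FE_mul; apply: exp_approx => //; apply: FN.
have -> : Es (-x) n.+1 * Es x n.+1 = horner_alg x (Eq n.+1 (-'X) * Eq n.+1 'X).
  by rewrite rmorphM /= !horner_Eq rmorphN /= horner_algX.
rewrite /FE -(rmorph1 (horner_alg x)) -rmorphB; apply: horner_F => // i iN.
by rewrite coefB (expneg_poly K0) // coef1 subrr.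
Qed.

Lemma zMM (a b c d : A) : a * b - c * d = a * (b - d) + (a - c) * d.
Proof. by rewrite mulrBr mulrBl addrA subrK. Qed.

Lemma zH (a b X : A) : a + b + (X - a) = X + b.
Proof. by rewrite addrC -addrA addKr. Qed.

Lemma Zid (p q : A) : p * q - 1 = (p - 1) + (q - 1) + (p - 1) * (q - 1).
Proof.
rewrite [(p - 1) * _]mulrBr mulr1 [(p - 1) * q]mulrBl mul1r zH.
by rewrite addrA subrK.
Qed.

Lemma prod_F1 x y : F 1 x -> F 1 y -> F 1 (fexp F x * fexp F y - 1).
Proof.
move=> Fx Fy; rewrite Zid; have H1 := exp1_F1 Fx; have H2 := exp1_F1 Fy.
by apply: FD; [apply: FD | apply: FMr].
Qed.

Lemma Z_lip x y x' y' m : F 1 x -> F 1 y -> F 1 x' -> F 1 y' ->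
  F m (x - x') -> F m (y - y') ->
  FE m.+1 ((fexp F x * fexp F y - 1) - (fexp F x' * fexp F y' - 1)) ((x - x') + (y - y')).
Proof.
move=> Fx Fy Fx' Fy' Hx Hy.
rewrite !Zid (zDD (_ + _)) (zDD (fexp F x - 1)).
rewrite -[(x - x') + (y - y')]addr0; apply: FE_add; first apply: FE_add.
- by rewrite zB1; apply: exp_lip.
- by rewrite zB1; apply: exp_lip.
rewrite /FE subr0.
set al := fexp F x - 1; set al' := fexp F x' - 1.
set be := fexp F y - 1; set be' := fexp F y' - 1.
have Hal : F m (al - al').
  apply: (@FE_F _ _ (x - x')) => //; rewrite /al /al' zB1.
  by apply: (@Fmono _ m.+1) => //; apply: exp_lip.
have Hbe : F m (be - be').
  apply: (@FE_F _ _ (y - y')) => //; rewrite /be /be' zB1.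
  by apply: (@Fmono _ m.+1) => //; apply: exp_lip.
have -> : al * be - al' * be' = al * (be - be') + (al - al') * be'.
  by rewrite zMM.
apply: FD; first by have := FM (exp1_F1 Fx) Hbe; rewrite add1n.
by have := FM Hal (exp1_F1 Fy'); rewrite addn1.
Qed.

Variable P : {linear A -> A}.
Hypothesis HPF : forall n x, F n x -> F n (P x).
Hypothesis HPM : forall x y, P (x * y) = P x * P y.
Hypothesis HPP : forall x, P (P x) = P x.

Lemma Ppow x k : P (x ^+ k.+1) = (P x) ^+ k.+1.
Proof. by elim: k => [|k IH]; rewrite ?expr1 // exprS HPM IH -exprS. Qed.

Lemma Es_split1 x N : Es x N.+1 = 1 + \sum_(k < N) ((k.+1)`!%:R^-1 *: x^+k.+1).
Proof. by rewrite /Es big_ord_recl /= fact0 invr1 scale1r expr0. Qed.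

Lemma P_exp x : F 1 x -> P (fexp F x - 1) = fexp F (P x) - 1.
Proof.
move=> Fx; have FPx := HPF Fx; apply: FE_eqS => n.
have Pe : P (Es x n.+1 - 1) = Es (P x) n.+1 - 1.
  rewrite !Es_split1 !zadd linear_sum; apply: eq_bigr => k _.
  by rewrite linearZ /= Ppow.
apply: (@FE_trans _ _ (P (Es x n.+1 - 1))).
  by rewrite /FE -linearB zB1; apply: HPF; apply: exp_approx.
rewrite Pe; apply: FE_sub; last exact: FE_refl.
by apply: FE_sym; apply: exp_approx.
Qed.

Lemma P_log z : F 1 z -> P (flog1p F z) = flog1p F (P z).
Proof.
move=> Fz1; have FPz := HPF Fz1; apply: FE_eqS => n.
have Pe : P (Ls z n.+1) = Ls (P z) n.+1.
  rewrite linear_sum; apply: eq_bigr => k _.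
  by rewrite linearZ /= Ppow.
apply: (@FE_trans _ _ (P (Ls z n.+1))).
  by rewrite /FE -linearB; apply: HPF; apply: log_approx.
by rewrite Pe; apply: FE_sym; apply: log_approx.
Qed.

Lemma log0 : flog1p F 0 = 0.
Proof.
apply: flim_eq => n; exists 0%N => m _.
have -> : \sum_(k < m) (((-1) ^+ k / (k.+1)%:R : K) *: (0 : A) ^+ k.+1) = 0.
  by apply: big1 => k _; rewrite expr0n /= scaler0.
by rewrite subrr; apply: Fz.
Qed.

Definition Phi u c := u - BCH F (P c) (c - P c).
Definition D c := flog1p F (fexp F (P c) * fexp F (c - P c) - 1).

Lemma Phi_eq u c : Phi u c = u - (D c - c).
Proof. by rewrite /Phi /BCH /flog zB1. Qed.

Lemma D_lip c c' m : F 1 c -> F 1 c' -> F m (c - c') -> FE m.+1 (D c - D c') (c - c').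
Proof.
move=> Fc Fc' H.
have Fx := HPF Fc; have Fx' := HPF Fc'.
have Fy := FB Fc Fx; have Fy' := FB Fc' Fx'.
have Hx : F m (P c - P c') by rewrite -linearB; apply: HPF.
have Hy : F m ((c - P c) - (c' - P c')) by rewrite zBB; apply: FB.
have HZ := Z_lip Fx Fy Fx' Fy' Hx Hy.
have Esum : (P c - P c') + ((c - P c) - (c' - P c')) = c - c'.
  by rewrite zBB addrC subrK.
rewrite Esum in HZ.
have FZ1 := prod_F1 Fx Fy; have FZ2 := prod_F1 Fx' Fy'.
have HZm := FE_F (Fmono (leqnSn m) HZ) H.
exact: FE_trans (log_lip FZ1 FZ2 HZm) HZ.
Qed.

Lemma Phi_lip u c c' m : F 1 c -> F 1 c' -> F m (c - c') ->
  F m.+1 (Phi u c - Phi u c').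
Proof.
move=> Fc Fc' H; rewrite !Phi_eq zI0; apply: FE_sym.
by rewrite /FE zBB; apply: D_lip.
Qed.

Lemma main u : F 1 u -> bch_rec F P u = u + BCH F (- P u) u.
Proof.
move=> Fu; set a := P u; have Fa : F 1 a := HPF Fu.
have FNa : F 1 (-a) := FN Fa.
set Y := fexp F (-a) * fexp F u.
have FY : F 1 (Y - 1) := prod_F1 FNa Fu.
set w := flog1p F (Y - 1).
have Fw : F 1 w := log_F1 FY.
have Pa : P a = a := HPP u.
have PY : P (Y - 1) = 0.
  rewrite /Y Zid linearD [P (_ - 1 + _)]linearD HPM !P_exp // linearN Pa -/a.
  by rewrite -Zid expN // subrr.
have Pw : P w = 0 by rewrite /w P_log // PY log0.
have Echi : u + BCH F (-a) u = w + a.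
  by rewrite /BCH /flog -/Y -/w opprK addrC subrK.
rewrite Echi.
set chi := w + a.
have Fchi : F 1 chi := FD Fw Fa.
have Pchi : P chi = a by rewrite linearD Pw Pa add0r.
have fixchi : Phi u chi = chi.
  rewrite /Phi /BCH /flog Pchi.
  have -> : chi - a = w by rewrite /chi addrK.
  have -> : fexp F w = Y by rewrite -[fexp F w](subrK 1) /w explog // subrK.
  have -> : fexp F a * Y = fexp F u.
    by rewrite /Y mulrA -{1}(opprK a) (expN FNa) mul1r.
  rewrite logexp //.
  by rewrite /chi opprB opprB addrCA [u + _]addrC subrK.
have Hit : forall n, F 1 (iter n (Phi u) u) /\ F n.+1 (iter n (Phi u) u - chi).
  elim => [|n [IH1 IH2]] /=; first by split => //; apply: FB.
  have H := Phi_lip u IH1 Fchi IH2; rewrite fixchi in H.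
  split => //; apply: (FE_F _ Fchi).
  by apply: (@Fmono _ n.+2).
apply: flim_eq => n; exists n => m nm.
have [_ H] := Hit m.
by apply: (Fmono _ H); apply: leqW.
Qed.
End Filt.

Unset Implicit Arguments.

Theorem lemma2p7 (K : fieldType) (A : algType K) (F : nat -> A -> Prop)
  (P : {linear A -> A}) :
  [pchar K] =i pred0 ->
  complete_filtration F ->
  (forall n x, F n x -> F n (P x)) ->
  (forall x y, P (x * y) = P x * P y) ->
  (forall x, P (P x) = P x) ->
  forall u, F 1%N u -> bch_rec F P u = u + BCH F (- P u) u.
Proof.
move=> K0 HF HPF HPM HPP u Fu.
exact: (main HF K0 HPF HPM HPP Fu).
Qed.
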